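(* (a) (Block 3.) Let $E/F$ be a degree-4 datum, with notation $\rho,\zeta,v,u,L,\theta$ as below, and let $\xi_\alpha,\xi_\beta,\xi_\gamma\in\mathbb Z/2\mathbb Z$ with $\xi_\alpha+\xi_\beta+\xi_\gamma=0$. Let $Q$ be the quiver with vertices $1,2,3$ and arrows $\alpha:2\to1$, $\beta:3\to2$, $\gamma:1\to3$, with fields $F_1=E$, $F_2=F_3=L$, and bimodules $A_\alpha=E^{\theta^{\xi_\alpha}}\otimes_LL$, $A_\beta=L^{\theta^{\xi_\beta}}\otimes_LL$, $A_\gamma=L^{\theta^{\xi_\gamma}}\otimes_LE$. Let $\Lambda'=T_R(A)/\langle\alpha\beta,\beta\gamma,\gamma\alpha\rangle$. Let $\widehat Q$ be $Q$ with an extra loop $s_1$ at vertex $1$, let $K=L$, $\sigma_a=\theta^{\xi_a}$ for $a\in\{\alpha,\beta,\gamma\}$, $\sigma_{s_1}=1_L$, and $\Lambda=L_{\boldsymbol\sigma}\widehat Q/\langle \alpha\beta,\beta\gamma,\gamma\alpha,\,s_1^2-ue_1\rangle$. Then $\Lambda'\cong\Lambda$ as $F$-algebras. (b) (Block 9.) Let $L/F$ be a degree-2 datum. Let $Q$ be as in (a) with fields $F_1=L$, $F_2=F_3=F$ and bimodules $A_\alpha=L\otimes_FF$, $A_\beta=F\otimes_FF$, $A_\gamma=F\otimes_FL$, and let $\Lambda'=T_R(A)/\langle\alpha\beta,\beta\gamma,\gamma\alpha\rangle$. Let $\widehat Q$ be $Q$ with an extra loop $s_1$ at $1$, $K=F$,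 all $\sigma$'s equal to $1_F$, and $\Lambda=F\widehat Q/\langle\alpha\beta,\beta\gamma,\gamma\alpha,\,s_1^2-u^2e_1\rangle$. Then $\Lambda'\cong\Lambda$ as $F$-algebras.
   Context: Degree-2 datum: a degree-2 field extension $L/F$ with $\operatorname{char}F\neq2$; $\theta$ denotes the nontrivial element of $\operatorname{Gal}(L/F)$ and $u\in L\setminus\{0\}$ satisfies $\theta(u)=-u$ (so $u^2\in F$). Degree-4 datum: a cyclic Galois extension $E/F$ of degree 4 with $F$ containing a primitive 4th root of unity $\zeta$; $\rho$ is a generator of $\operatorname{Gal}(E/F)$, $v\in E\setminus\{0\}$ satisfies $\rho(v)=\zeta v$, $u:=v^2$, $L:=F(u)$ is the unique intermediate field with $[L:F]=2$, and $\theta:=\rho|_L$ generates $\operatorname{Gal}(L/F)$ (so $\theta(u)=-u$). Twisted bimodules: for fields $K'''\subseteq K',K''$ and an automorphism $g$ of $K'''$, $K'^{g}\otimes_{K'''}K''$ is the $K'$-$K''$-bimodule where $K'^g$ is $K'$ with left multiplication and right action $m\star z=m\,g(z)$ ($z\in K'''$). Tensor ring of a species: for a quiver $Q$ with fields $F_i$ at vertices and for each arrow $a:t(a)\to h(a)$ a bimodule $A_a=F_{h(a)}^{g_a}\otimes_{F_{h(a)}\cap F_{t(a)}}F_{t(a)}$, put $R=\prod_iF_i$ (with primitive idempotents $e_i$), $A=\bigoplus_aA_a$ (an $R$-$R$-bimodule) and $T_R(A)=\bigoplus_{n\ge0}A^{\otimes_Rn}$. The symbol $a$ denotes the element $1\otimes1\in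 A_a$; products of arrows are written right-to-left ($ab$ means $b$ followed by $a$, defined when $h(b)=t(a)$); one has $az=g_a(z)a$ for $z\in F_{h(a)}\cap F_{t(a)}$, and field elements written next to arrows are elements of $F_i\subseteq R$ at the appropriate vertex. $\langle X\rangle$ denotes the two-sided ideal generated by $X$. Semilinear path algebra: for a quiver $\widehat Q$, a field $K$ and automorphisms $\sigma_b\in\operatorname{Gal}(K/F)$ for $b\in\widehat Q_1$, $K_{\boldsymbol\sigma}\widehat Q$ is the tensor ring over $S=\prod_{i\in\widehat Q_0}K$ of the $S$-$S$-bimodule $\bigoplus_b K^{\sigma_b}\otimes_KK$; equivalently the ring generated by $S$ and the arrows $b=e_{h(b)}be_{t(b)}$ subject to $b\lambda=\sigma_b(\lambda)b$ for $\lambda\in K$. When all $\sigma_b$ are trivial this is the ordinary path algebra $K\widehat Q$. *)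

(* Defs.v *)
From HB Require Import structures.
From mathcomp Require Import all_boot all_order all_algebra all_fingroup all_field.
From mathcomp Require Import monalg.

Set Implicit Arguments.
Unset Strict Implicit.
Unset Printing Implicit Defensive.

Import GRing.Theory.
Local Open Scope ring_scope.

Definition FreeAlg (F : fieldType) (G : choiceType) : lalgType F :=
  monalg.malg (monalg.fmonom G) F.

Definition fgen (F : fieldType) (G : choiceType) (g : G) : FreeAlg F G :=
  monalg.mkmalgU (monalg.fmu g) 1.

Definition ideal_gen (F : fieldType) (A : lalgType F) (S : A -> Prop) (x : A)
  : Prop :=
  exists n (a s b : 'I_n -> A),
    (forall i, S (s i)) /\ x = \sum_(i < n) a i * s i * b i.

(* Since A and B are free, every F-algebra morphism A/<SA> -> B/<SB> lifts
   to an F-algebra morphism A -> B; so an isomorphism of the quotients is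
   exactly given by a pair of morphisms of the free algebras preserving the
   ideals and inverse to each other modulo the ideals. *)
Definition quot_alg_iso (F : fieldType) (A B : lalgType F)
  (SA : A -> Prop) (SB : B -> Prop) : Prop :=
  exists (f : {lrmorphism A -> B}) (g : {lrmorphism B -> A}),
    [/\ forall x, ideal_gen SA x -> ideal_gen SB (f x),
        forall y, ideal_gen SB y -> ideal_gen SA (g y),
        forall x, ideal_gen SA (g (f x) - x)
      & forall y, ideal_gen SB (f (g y) - y)].

(* Tensor ring T_R(A) of a species, R = prod_i F_i, A = (+)_a A_a with  *)
(* A_a = F_{h(a)}^{g_a} (x)_{F_{h(a)} cap F_{t(a)}} F_{t(a)}.          *)
(* All vertex fields F_i are subfields of a common field extension E  *)
(* of F.  T_R(A) is the F-algebra generated by the elements of the      *)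
(* F_i (at vertex i) and the arrows a, subject to: each F_i -> T_R(A)   *)
(* is an F-algebra map onto a corner with unit e_i, the e_i are         *)
(* orthogonal idempotents with sum 1, a = e_h(a) a e_t(a), and          *)
(* a z = g_a(z) a for z in F_h(a) cap F_t(a).                           *)

Section Species.
Variables (F : fieldType) (E : fieldExtType F) (V : finType) (Ar : choiceType).
Variables (Fv : V -> {subfield E}) (hd tl : Ar -> V) (tw : Ar -> E -> E).

Definition vgen := {x : V * E | x.2 \in Fv x.1}.
Definition spgen : choiceType := (vgen + Ar)%type.
Definition spalg : lalgType F := FreeAlg F spgen.

Definition sp_fld (i : V) (l : E) : spalg :=
  if insub (i, l) is Some x then fgen F (inl x : spgen) else 0.
Definition sp_e (i : V) : spalg := sp_fld i 1.
Definition sp_arr (a : Ar) : spalg := fgen F (inr a : spgen).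

Definition species_rel (r : spalg) : Prop :=
     (exists i l m, [/\ l \in Fv i, m \in Fv i &
         r = sp_fld i (l + m) - (sp_fld i l + sp_fld i m)])
  \/ (exists i l m, [/\ l \in Fv i, m \in Fv i &
         r = sp_fld i (l * m) - sp_fld i l * sp_fld i m])
  \/ (exists i (c : F), r = sp_fld i (c%:A) - c *: sp_e i)
  \/ (r = \sum_(i : V) sp_e i - 1)
  \/ (exists i j, i != j /\ r = sp_e i * sp_e j)
  \/ (exists a, r = sp_arr a - sp_e (hd a) * sp_arr a * sp_e (tl a))
  \/ (exists a z, z \in (Fv (hd a) :&: Fv (tl a))%VS /\
         r = sp_arr a * sp_fld (tl a) z - sp_fld (hd a) (tw a z) * sp_arr a).

Definition pres_rel (X : spalg -> Prop) (r : spalg) : Prop :=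
  species_rel r \/ X r.

End Species.

Arguments spalg {F E V} Ar Fv.
Arguments sp_fld {F E V Ar} Fv i l.
Arguments sp_e {F E V Ar} Fv i.
Arguments sp_arr {F E V Ar} Fv a.
Arguments species_rel {F E V Ar} Fv hd tl tw r.
Arguments pres_rel {F E V Ar} Fv hd tl tw X r.

(* The quivers Q (vertices 1,2,3 = ords 0,1,2; arrows alpha,beta,gamma *)
(* = ords 0,1,2) and Qhat = Q plus a loop s1 (= ord 3) at vertex 1.    *)
Definition vx1 : 'I_3 := inord 0.
Definition vx2 : 'I_3 := inord 1.
Definition vx3 : 'I_3 := inord 2.

Definition Q_hd (a : 'I_3) : 'I_3 :=
  match val a with 0%N => vx1 | 1%N => vx2 | _ => vx3 end.
Definition Q_tl (a : 'I_3) : 'I_3 :=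
  match val a with 0%N => vx2 | 1%N => vx3 | _ => vx1 end.
Definition Q_alpha : 'I_3 := inord 0.
Definition Q_beta : 'I_3 := inord 1.
Definition Q_gamma : 'I_3 := inord 2.

Definition Qh_hd (b : 'I_4) : 'I_3 :=
  match val b with 0%N => vx1 | 1%N => vx2 | 2%N => vx3 | _ => vx1 end.
Definition Qh_tl (b : 'I_4) : 'I_3 :=
  match val b with 0%N => vx2 | 1%N => vx3 | 2%N => vx1 | _ => vx1 end.
Definition Qh_alpha : 'I_4 := inord 0.
Definition Qh_beta : 'I_4 := inord 1.
Definition Qh_gamma : 'I_4 := inord 2.
Definition Qh_s1 : 'I_4 := inord 3.

Definition Q_paths (F : fieldType) (E : fieldExtType F)
  (Fv : 'I_3 -> {subfield E}) (r : spalg 'I_3 Fv) : Prop :=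
  r = sp_arr Fv Q_alpha * sp_arr Fv Q_beta \/
  r = sp_arr Fv Q_beta * sp_arr Fv Q_gamma \/
  r = sp_arr Fv Q_gamma * sp_arr Fv Q_alpha.

Definition Qh_rels (F : fieldType) (E : fieldExtType F)
  (Fv : 'I_3 -> {subfield E}) (w : E) (r : spalg 'I_4 Fv) : Prop :=
  r = sp_arr Fv Qh_alpha * sp_arr Fv Qh_beta \/
  r = sp_arr Fv Qh_beta * sp_arr Fv Qh_gamma \/
  r = sp_arr Fv Qh_gamma * sp_arr Fv Qh_alpha \/
  r = sp_arr Fv Qh_s1 * sp_arr Fv Qh_s1 - sp_fld Fv vx1 w.
Arguments Q_paths {F E} Fv r.
Arguments Qh_rels {F E} Fv w r.

(* Main.v *)
Require Import Defs.
From HB Require Import structures.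
From mathcomp Require Import all_boot all_order all_algebra all_fingroup all_field.
From mathcomp Require Import monalg.
From mathcomp Require Import ring zify.
Set Implicit Arguments.
Unset Strict Implicit.
Unset Printing Implicit Defensive.
Import GRing.Theory.
Local Open Scope ring_scope.

Lemma faC_comm (F : fieldType) (G : choiceType) (c : F) (x : FreeAlg F G) :
  x * (c%:MP : FreeAlg F G) = (c%:MP : FreeAlg F G) * x.
Proof.
rewrite [x]monalgE big_distrl big_distrr /=; apply: eq_bigr => k _.
by rewrite !malgM_def !(@fgmulUU _ F) mulm1 mul1m [x@_k * c]mulrC.
Qed.


Section FreeAlgTh.
Variables (F : fieldType) (G : choiceType).
Local Notation A := (FreeAlg F G).
Implicit Types x y : A.

Lemma faUU (c d : F) (m1 m2 : fmonom G) :
  (<< c *g m1 >> : A) * << d *g m2 >> = << c * d *g (mmul m1 m2) >>.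
Proof. exact: fgmulUU. Qed.

Lemma faUZ (c : F) (m : fmonom G) : (<< c *g m >> : A) = c *: << m >>.
Proof. by apply/malgP => k; rewrite mcoeffZ !mcoeffU mulr_natr. Qed.

Lemma fa_ind (P : A -> Prop) :
  (forall x y, P x -> P y -> P (x + y)) -> (forall c x, P x -> P (c *: x)) ->
  P 0 -> P 1 ->
  (forall x y, P x -> P y -> P (x * y)) -> (forall g, P (fgen F g)) -> forall x, P x.
Proof.
move=> PD PZ P0 P1 PM Pg x; rewrite [x]monalgE.
elim: (finmap.enum_fset (msupp x)) => [|k s IH]; first by rewrite big_nil.
rewrite big_cons; apply: PD => //; rewrite faUZ; apply: PZ.
case: k => s'; elim: s' => [|i s' IHs].
  have -> : FMonom [::] = (mone : fmonom G) by apply: val_inj; rewrite /= fm1.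
  exact: P1.
have -> : FMonom (i :: s') = (mmul (fmu i) (FMonom s')) by apply: val_inj; rewrite /= fmM fmU.
have := faUU 1 1 (fmu i) (FMonom s'); rewrite mulr1 => <-.
apply: PM => //; exact: Pg.
Qed.

Section Lift.
Variables (H : choiceType) (phi : G -> FreeAlg F H).
Local Notation B := (FreeAlg F H).
Definition liftm (m : fmonom G) : B := \prod_(i <- (m : seq G)) phi i.
Lemma liftm_mmorph : mmorphism liftm.
Proof.
split; first by move=> m1 m2; rewrite /liftm fmM big_cat.
by rewrite /liftm fm1 big_nil.
Qed.
HB.instance Definition _ := monalg.isMultiplicative.Build (fmonom G) B liftm liftm_mmorph.

Definition liftf (x : A) : B := mmap (@mkmalgU (fmonom H) F mone) liftm x.

Lemma liftf_mult : multiplicative liftf.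
Proof.
apply: commr_mmap_is_multiplicative => g m m'.
by rewrite /GRing.comm /= faC_comm.
Qed.

Lemma liftf_scal : scalable liftf.
Proof. by move=> c x; rewrite /liftf mmapZ /= mul_malgC. Qed.

Lemma liftf_zmod : zmod_morphism liftf.
Proof. by move=> x y; rewrite /liftf raddfB. Qed.
HB.instance Definition _ := GRing.isZmodMorphism.Build A B liftf liftf_zmod.
HB.instance Definition _ := GRing.isMultiplicative.Build A B liftf liftf_mult.
HB.instance Definition _ := GRing.isScalable.Build F A B *:%R liftf liftf_scal.

Lemma liftf_gen g : liftf (fgen F g) = phi g.
Proof. by rewrite /liftf /fgen mmapU /= mul1r /liftm fmU big_seq1. Qed.

Definition liftL : {lrmorphism A -> B} := liftf.
Lemma liftL_gen g : liftL (fgen F g) = phi g.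
Proof. exact: liftf_gen. Qed.
End Lift.
End FreeAlgTh.

Section Ideal.
Variables (F : fieldType) (A : lalgType F) (S : A -> Prop).
Local Notation I := (ideal_gen S).

Lemma idl0 : I 0.
Proof. exists 0%N, (fun _ => 0), (fun _ => 0), (fun _ => 0); split => [[]//|]. by rewrite big_ord0. Qed.

Lemma idlS s : S s -> I s.
Proof.
move=> Ss; exists 1%N, (fun _ => 1), (fun _ => s), (fun _ => 1); split => //.
by rewrite big_ord1 mul1r mulr1.
Qed.

Lemma idlD x y : I x -> I y -> I (x + y).
Proof.
move=> [n [a [s [b [Hs ->]]]]] [m [a' [s' [b' [Hs' ->]]]]].
exists (n + m)%N, (fun i => match split i with inl j => a j | inr j => a' j end),
  (fun i => match split i with inl j => s j | inr j => s' j end),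
  (fun i => match split i with inl j => b j | inr j => b' j end); split.
  by move=> i; case: (split i).
rewrite big_split_ord /=; congr (_ + _); apply: eq_bigr => i _.
  by rewrite (unsplitK (inl i)).
by rewrite (unsplitK (inr i)).
Qed.

Lemma idlMl z x : I x -> I (z * x).
Proof.
move=> [n [a [s [b [Hs ->]]]]]; exists n, (fun i => z * a i), s, b; split => //.
by rewrite mulr_sumr; apply: eq_bigr => i _; rewrite !mulrA.
Qed.

Lemma idlMr x z : I x -> I (x * z).
Proof.
move=> [n [a [s [b [Hs ->]]]]]; exists n, a, s, (fun i => b i * z); split => //.
by rewrite mulr_suml; apply: eq_bigr => i _; rewrite !mulrA.
Qed.

Lemma idlN x : I x -> I (- x).
Proof. by move=> Ix; rewrite -mulN1r; apply: idlMl. Qed.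

Lemma idlB x y : I x -> I y -> I (x - y).
Proof. by move=> Ix Iy; apply: idlD => //; apply: idlN. Qed.

Lemma idlZ c x : I x -> I (c *: x).
Proof. by move=> Ix; rewrite -[x]mul1r scalerAl; apply: idlMl. Qed.

Lemma idl_sum (J : Type) (r : seq J) (P : pred J) (G : J -> A) :
  (forall j, P j -> I (G j)) -> I (\sum_(j <- r | P j) G j).
Proof.
move=> HG; elim/big_rec: _ => [|j y Pj Iy]; first exact: idl0.
by apply: idlD => //; apply: HG.
Qed.

Definition eqv (x y : A) := I (x - y).

Lemma eqv_refl x : eqv x x.
Proof. by rewrite /eqv subrr; apply: idl0. Qed.
Lemma eqv_sym x y : eqv x y -> eqv y x.
Proof. by rewrite /eqv => /idlN; rewrite opprB. Qed.
Lemma eqv_trans y x z : eqv x y -> eqv y z -> eqv x z.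
Proof.
rewrite /eqv => Ixy Iyz; have := idlD Ixy Iyz.
by rewrite addrA subrK.
Qed.
Lemma eqvD x y x' y' : eqv x x' -> eqv y y' -> eqv (x + y) (x' + y').
Proof.
rewrite /eqv => Ix Iy; have := idlD Ix Iy.
by rewrite opprD addrACA.
Qed.
Lemma eqvN x x' : eqv x x' -> eqv (- x) (- x').
Proof. by rewrite /eqv -opprD => /idlN. Qed.
Lemma eqvB x y x' y' : eqv x x' -> eqv y y' -> eqv (x - y) (x' - y').
Proof. by move=> ? ?; apply: eqvD => //; apply: eqvN. Qed.
Lemma eqvM x y x' y' : eqv x x' -> eqv y y' -> eqv (x * y) (x' * y').
Proof.
rewrite /eqv => Ix Iy.
have -> : x * y - x' * y' = (x - x') * y + x' * (y - y').
  by rewrite mulrBl mulrBr addrA subrK.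
by apply: idlD; [apply: idlMr | apply: idlMl].
Qed.
Lemma eqvZ c x x' : eqv x x' -> eqv (c *: x) (c *: x').
Proof. by rewrite /eqv -scalerBr; apply: idlZ. Qed.
Lemma eqv_sum (J : Type) (r : seq J) (P : pred J) (G G' : J -> A) :
  (forall j, P j -> eqv (G j) (G' j)) ->
  eqv (\sum_(j <- r | P j) G j) (\sum_(j <- r | P j) G' j).
Proof.
move=> HG; rewrite /eqv -sumrB; apply: idl_sum => j Pj; exact: HG.
Qed.
Lemma eqv0 x : eqv x 0 <-> I x.
Proof. by rewrite /eqv subr0. Qed.
Lemma eqv_eq x y : x = y -> eqv x y.
Proof. by move=> ->; apply: eqv_refl. Qed.
End Ideal.

Lemma map_ideal (F : fieldType) (A B : lalgType F) (SA : A -> Prop) (SB : B -> Prop)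
  (f : {lrmorphism A -> B}) :
  (forall s, SA s -> ideal_gen SB (f s)) -> forall x, ideal_gen SA x -> ideal_gen SB (f x).
Proof.
move=> Hf x [n [a [s [b [Hs ->]]]]]; rewrite rmorph_sum; apply: idl_sum => i _.
by rewrite !rmorphM; apply: idlMr; apply: idlMl; apply: Hf.
Qed.

Lemma roundtrip (F : fieldType) (G : choiceType) (B : lalgType F)
  (SA : FreeAlg F G -> Prop) (f : {lrmorphism FreeAlg F G -> B})
  (g : {lrmorphism B -> FreeAlg F G}) :
  (forall x, ideal_gen SA (g (f (fgen F x)) - fgen F x)) ->
  forall x, ideal_gen SA (g (f x) - x).
Proof.
move=> Hg; apply: fa_ind => //.
- move=> x y Ix Iy; rewrite !rmorphD opprD addrACA; exact: idlD.
- move=> c x Ix; rewrite !linearZ /= -scalerDr; exact: idlZ.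
- by rewrite (raddf0 f) (raddf0 g) subrr; apply: idl0.
- by rewrite (rmorph1 f) (rmorph1 g) subrr; apply: idl0.
- move=> x y Ix Iy; rewrite !rmorphM.
  have -> : g (f x) * g (f y) - x * y = (g (f x) - x) * g (f y) + x * (g (f y) - y).
    by rewrite mulrBl mulrBr addrA subrK.
  by apply: idlD; [apply: idlMr | apply: idlMl].
Qed.
Arguments eqv_refl {F A S} x.
Lemma eqvMA (F : fieldType) (A : lalgType F) (S : A -> Prop) (x y z y' z' : A) :
  eqv S (y * z) (y' * z') -> eqv S (x * y * z) (x * y' * z').
Proof. by move=> H; rewrite -!mulrA; apply: eqvM => //; apply: eqv_refl. Qed.
Arguments eqv_eq {F A S x y} _.
Arguments eqv0 {F A S} x.

Section Sp.
Variables (F : fieldType) (E : fieldExtType F) (V : finType) (Ar : choiceType).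
Variables (Fv : V -> {subfield E}) (hd tl : Ar -> V) (tw : Ar -> E -> E).
Variable (X : spalg Ar Fv -> Prop).
Local Notation R := (pres_rel Fv hd tl tw X).
Local Notation "x === y" := (eqv R x y) (at level 70).
Local Notation fld := (@sp_fld _ _ _ Ar Fv).

Lemma spD i l m : l \in Fv i -> m \in Fv i -> fld i (l + m) === fld i l + fld i m.
Proof. by move=> Hl Hm; apply: idlS; left; left; exists i, l, m. Qed.
Lemma spM i l m : l \in Fv i -> m \in Fv i -> fld i (l * m) === fld i l * fld i m.
Proof. by move=> Hl Hm; apply: idlS; left; right; left; exists i, l, m. Qed.
Lemma spZ i (c : F) : fld i c%:A === c *: sp_e Fv i.
Proof. by apply: idlS; left; do 2 right; left; exists i, c. Qed.
Lemma spSum : \sum_i sp_e Fv i === 1.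
Proof. by apply: idlS; left; do 3 right; left. Qed.
Lemma spOrth i j : i != j -> sp_e Fv i * sp_e Fv j === 0.
Proof. by move=> ij; apply: idlS; left; do 4 right; left; exists i, j; rewrite subr0. Qed.
Lemma spArr a : sp_arr Fv a === sp_e Fv (hd a) * sp_arr Fv a * sp_e Fv (tl a).
Proof. by apply: idlS; left; do 5 right; left; exists a. Qed.
Lemma spTw a z : z \in (Fv (hd a) :&: Fv (tl a))%VS ->
  sp_arr Fv a * fld (tl a) z === fld (hd a) (tw a z) * sp_arr Fv a.
Proof. by move=> Hz; apply: idlS; left; do 6 right; exists a, z. Qed.
Lemma spX r : X r -> r === 0.
Proof. by move=> Xr; apply: idlS; right; rewrite subr0. Qed.

Lemma sp0 i : fld i 0 === 0.
Proof.
have := spD (mem0v (Fv i)) (mem0v (Fv i)); rewrite addr0 /eqv opprD addrA subrr add0r.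
by move=> /idlN; rewrite opprK subr0.
Qed.
Lemma sp_out i l : l \notin Fv i -> fld i l = 0.
Proof. by move=> Hl; rewrite /sp_fld insubF //; apply: negbTE. Qed.
Lemma sp_gen (x : vgen Fv) : fgen F (inl x : spgen Ar Fv) = fld (val x).1 (val x).2.
Proof. by rewrite /sp_fld; case: x => [[i l] Hx] /=; rewrite insubT. Qed.

Lemma spEl i l : l \in Fv i -> sp_e Fv i * fld i l === fld i l.
Proof.
move=> Hl; apply: eqv_sym; have := spM (mem1v (Fv i)) Hl; rewrite mul1r; exact.
Qed.
Lemma spEr i l : l \in Fv i -> fld i l * sp_e Fv i === fld i l.
Proof.
move=> Hl; apply: eqv_sym; have := spM Hl (mem1v (Fv i)); rewrite mulr1; exact.
Qed.
End Sp.
Lemma sp_arrE (F : fieldType) (E : fieldExtType F) (V : finType) (Ar : choiceType)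
  (Fv : V -> {subfield E}) (a : Ar) : fgen F (inr a : spgen Ar Fv) = sp_arr Fv a.
Proof. by []. Qed.

Lemma vinord n i : (i < n.+1)%N -> \val (inord i : 'I_n.+1) = i.
Proof. exact: inordK. Qed.

Lemma rearr (R : zmodType) (P Q R' S : R) : P + Q + (R' + S) = P + R' + (S + Q).
Proof. by rewrite addrACA [S + Q]addrC. Qed.

Section Main.
Variables (F : fieldType) (E : fieldExtType F) (K : {subfield E}) (v : E).
Variables (tw : 'I_3 -> E -> E) (twK : 'I_4 -> E -> E).
Hypothesis Hv2 : v ^+ 2 \in K.
Hypothesis HvK : v \notin K.
Hypothesis Hdec : forall x : E, exists a, exists b, [/\ a \in K, b \in K & x = a + b * v].
Hypothesis Htw : forall a z, z \in K -> tw a z \in K.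
Hypothesis HtwK : forall (a : 'I_3) z, z \in K -> twK (inord a) z = tw a z.
Hypothesis HtwK1 : forall z, z \in K -> twK Qh_s1 z = z.

Definition decP (x : E) (ab : E * E) : bool :=
  [&& ab.1 \in K, ab.2 \in K & x == ab.1 + ab.2 * v].
Lemma decEx x : exists ab, decP x ab.
Proof.
have [a [b [Ha Hb ->]]] := Hdec x; exists (a, b); by rewrite /decP /= Ha Hb eqxx.
Qed.
Definition ca x := (xchoose (decEx x)).1.
Definition cb x := (xchoose (decEx x)).2.
Lemma caK x : ca x \in K.
Proof. by have /and3P[] := xchooseP (decEx x). Qed.
Lemma cbK x : cb x \in K.
Proof. by have /and3P[] := xchooseP (decEx x). Qed.
Lemma caE x : x = ca x + cb x * v.
Proof. by have /and3P[_ _ /eqP] := xchooseP (decEx x). Qed.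

Lemma dec_uniq a b a' b' : a \in K -> b \in K -> a' \in K -> b' \in K ->
  a + b * v = a' + b' * v -> a = a' /\ b = b'.
Proof.
move=> Ha Hb Ha' Hb' Heq.
have Hbb : b = b'.
  apply/eqP; apply: contraR HvK => nb.
  have -> : v = (a' - a) / (b - b').
    apply: (canRL (mulfK _)); first by rewrite subr_eq0.
    have -> : a' = a + b * v - b' * v by rewrite Heq addrK.
    ring.
  by rewrite rpred_div ?rpredB.
by split => //; move: Heq; rewrite Hbb => /addIr.
Qed.

Lemma dec_eq a b : a \in K -> b \in K -> ca (a + b * v) = a /\ cb (a + b * v) = b.
Proof.
move=> Ha Hb; have := caE (a + b * v).
by move=> /esym /dec_uniq => /(_ (caK _) (cbK _) Ha Hb).
Qed.

Lemma caKin z : z \in K -> ca z = z /\ cb z = 0.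
Proof. by move=> Hz; have := dec_eq Hz (mem0v K); rewrite mul0r addr0. Qed.
Lemma ca_v : ca v = 0 /\ cb v = 1.
Proof. by have := dec_eq (mem0v K) (mem1v K); rewrite add0r mul1r. Qed.
Lemma caD x y : ca (x + y) = ca x + ca y /\ cb (x + y) = cb x + cb y.
Proof.
have := dec_eq (rpredD (caK x) (caK y)) (rpredD (cbK x) (cbK y)).
have -> : ca x + ca y + (cb x + cb y) * v = x + y.
  by rewrite [x in RHS]caE [y in RHS]caE; ring.
done.
Qed.
Lemma caM x y : ca (x * y) = ca x * ca y + cb x * cb y * v ^+ 2 /\
                cb (x * y) = ca x * cb y + cb x * ca y.
Proof.
have Ha := caK x; have Hb := cbK x; have Hc := caK y; have Hd := cbK y.
have := dec_eq (rpredD (rpredM Ha Hc) (rpredM (rpredM Hb Hd) Hv2))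
               (rpredD (rpredM Ha Hd) (rpredM Hb Hc)).
have -> : ca x * ca y + cb x * cb y * v ^+ 2 + (ca x * cb y + cb x * ca y) * v = x * y.
  by rewrite [x in RHS]caE [y in RHS]caE; ring.
done.
Qed.

Definition Fv' (i : 'I_3) : {subfield E} := if i == vx1 then {:E}%AS else K.
Definition FvK (i : 'I_3) : {subfield E} := K.
Local Notation A := (spalg 'I_3 Fv').
Local Notation B := (spalg 'I_4 FvK).
Local Notation RA := (pres_rel Fv' Q_hd Q_tl tw (Q_paths Fv')).
Local Notation RB := (pres_rel FvK Qh_hd Qh_tl twK (Qh_rels FvK (v ^+ 2))).
Local Notation s1 := (sp_arr FvK Qh_s1).
Local Notation fb l := (sp_fld FvK vx1 l).

Lemma inFv' i l : l \in K -> l \in Fv' i.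
Proof. by rewrite /Fv'; case: ifP => // _; rewrite memvf. Qed.
Lemma Fv'1 l : l \in Fv' vx1.
Proof. by rewrite /Fv' eqxx memvf. Qed.
Lemma Fv'ne i : i != vx1 -> Fv' i = K.
Proof. by rewrite /Fv' => /negbTE ->. Qed.

Definition phiF (i : 'I_3) (l : E) : B :=
  if i == vx1 then (fb (ca l)) + (fb (cb l)) * s1 else sp_fld FvK i l.
Definition arrI (a : 'I_3) : 'I_4 := inord a.
Definition fgenA (g : spgen 'I_3 Fv') : B :=
  match g with inl x => phiF (val x).1 (val x).2 | inr a => sp_arr FvK (arrI a) end.
Definition fgenB (g : spgen 'I_4 FvK) : A :=
  match g with
  | inl x => sp_fld Fv' (val x).1 (val x).2
  | inr b => if (b < 3)%N then sp_arr Fv' (inord b) else sp_fld Fv' vx1 v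
  end.
Definition fA : {lrmorphism A -> B} := liftL fgenA.
Definition gB : {lrmorphism B -> A} := liftL fgenB.

Lemma fA_fld i l : fA (sp_fld Fv' i l) = if l \in Fv' i then phiF i l else 0.
Proof.
rewrite /sp_fld; case: insubP => [x Hx Hv | Hn] /=.
  by rewrite /fA liftL_gen /= Hv Hx.
by rewrite (negbTE Hn) raddf0.
Qed.
Lemma fA_arr a : fA (sp_arr Fv' a) = sp_arr FvK (arrI a).
Proof. by rewrite /fA /sp_arr liftL_gen. Qed.
Lemma gB_fld i l : gB (sp_fld FvK i l) = if l \in K then sp_fld Fv' i l else 0.
Proof.
rewrite /sp_fld; case: insubP => [x Hx Hv | Hn] /=.
  by rewrite /gB liftL_gen /= Hv Hx.
by rewrite (negbTE Hn) raddf0.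
Qed.
Lemma gB_arr b : gB (sp_arr FvK b) =
  if (b < 3)%N then sp_arr Fv' (inord b) else sp_fld Fv' vx1 v.
Proof. by rewrite /gB /sp_arr liftL_gen. Qed.

Opaque sp_fld sp_arr fgen.

Lemma val_arrI a : nat_of_ord (arrI a) = nat_of_ord a.
Proof. by rewrite /arrI inordK // (ltn_trans (ltn_ord a)). Qed.
Lemma hd_arrI a : Qh_hd (arrI a) = Q_hd a /\ Qh_tl (arrI a) = Q_tl a.
Proof.
rewrite /Qh_hd /Qh_tl /Q_hd /Q_tl /= val_arrI.
by case: a => [[|[|[|m]]] Hm].
Qed.
Lemma arrIK a : (inord (arrI a) : 'I_3) = a.
Proof. by apply: val_inj; rewrite /arrI /= !inordK // (ltn_trans (ltn_ord a)). Qed.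
Lemma arrIE (b : 'I_4) : (b < 3)%N -> arrI (inord b) = b.
Proof. by move=> Hb; apply: val_inj; rewrite /= val_arrI /= inordK. Qed.
Lemma b3 (b : 'I_4) : ~~ (b < 3)%N -> b = Qh_s1.
Proof.
move=> Hb; apply: val_inj; rewrite /Qh_s1 /= inordK //.
by case: b Hb => [[|[|[|[|m]]]] Hm].
Qed.
Lemma s1_ends : Qh_hd Qh_s1 = vx1 /\ Qh_tl Qh_s1 = vx1.
Proof. by rewrite /Qh_hd /Qh_tl /Qh_s1 vinord. Qed.
Lemma vx_ne : vx2 != vx1 /\ vx3 != vx1.
Proof. by split; apply/eqP => /(congr1 val); rewrite /= !inordK. Qed.
Lemma arr_capK a z : z \in (Fv' (Q_hd a) :&: Fv' (Q_tl a))%VS -> z \in K.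
Proof.
have [n2 n3] := vx_ne.
move=> /memv_capP[H1 H2]; case: a H1 H2 => [[|[|[|m]]] Hm] //= H1 H2;
  [move: H2 | move: H1 | move: H1]; by rewrite /= ?(Fv'ne n2) ?(Fv'ne n3).
Qed.
Lemma arrI_paths : [/\ arrI Q_alpha = Qh_alpha, arrI Q_beta = Qh_beta & arrI Q_gamma = Qh_gamma].
Proof. by split; apply: val_inj; rewrite /= val_arrI /= !inordK. Qed.
Lemma inord_paths : [/\ (inord Qh_alpha : 'I_3) = Q_alpha, (inord Qh_beta : 'I_3) = Q_beta
   & (inord Qh_gamma : 'I_3) = Q_gamma].
Proof. by split; apply: val_inj; rewrite /= !inordK. Qed.

Local Notation "x =B= y" := (eqv RB x y) (at level 70).
Local Notation "x =A= y" := (eqv RA x y) (at level 70).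

Local Notation RXB := (Qh_rels FvK (v ^+ 2)).
Local Notation RXA := (Q_paths Fv').
Lemma bD i l m : l \in K -> m \in K ->
  sp_fld FvK i (l + m) =B= sp_fld FvK i l + sp_fld FvK i m.
Proof. exact: (spD Qh_hd Qh_tl twK RXB). Qed.
Lemma bM i l m : l \in K -> m \in K ->
  sp_fld FvK i (l * m) =B= sp_fld FvK i l * sp_fld FvK i m.
Proof. exact: (spM Qh_hd Qh_tl twK RXB). Qed.
Lemma bZ i c : sp_fld FvK i c%:A =B= c *: sp_e FvK i.
Proof. exact: (spZ Qh_hd Qh_tl twK RXB). Qed.
Lemma b0 i : sp_fld FvK i 0 =B= 0.
Proof. exact: (sp0 Qh_hd Qh_tl twK RXB). Qed.
Lemma bEl i l : l \in K -> sp_e FvK i * sp_fld FvK i l =B= sp_fld FvK i l.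
Proof. exact: (spEl Qh_hd Qh_tl twK RXB). Qed.
Lemma bArr b : sp_arr FvK b =B= sp_e FvK (Qh_hd b) * sp_arr FvK b * sp_e FvK (Qh_tl b).
Proof. exact: (spArr Qh_hd Qh_tl twK RXB). Qed.
Lemma bTw b z : z \in (K :&: K)%VS ->
  sp_arr FvK b * sp_fld FvK (Qh_tl b) z =B= sp_fld FvK (Qh_hd b) (twK b z) * sp_arr FvK b.
Proof. exact: (spTw twK RXB). Qed.
Lemma bX r : RXB r -> r =B= 0.
Proof. exact: (spX Qh_hd Qh_tl twK). Qed.
Lemma bSum : \sum_i sp_e FvK i =B= 1.
Proof. exact: (spSum Qh_hd Qh_tl twK RXB). Qed.
Lemma bOrth i j : i != j -> sp_e FvK i * sp_e FvK j =B= 0.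
Proof. exact: (spOrth Qh_hd Qh_tl twK RXB). Qed.

Lemma aD i l m : l \in Fv' i -> m \in Fv' i ->
  sp_fld Fv' i (l + m) =A= sp_fld Fv' i l + sp_fld Fv' i m.
Proof. exact: (spD Q_hd Q_tl tw RXA). Qed.
Lemma aM i l m : l \in Fv' i -> m \in Fv' i ->
  sp_fld Fv' i (l * m) =A= sp_fld Fv' i l * sp_fld Fv' i m.
Proof. exact: (spM Q_hd Q_tl tw RXA). Qed.
Lemma aZ i c : sp_fld Fv' i c%:A =A= c *: sp_e Fv' i.
Proof. exact: (spZ Q_hd Q_tl tw RXA). Qed.
Lemma aEl i l : l \in Fv' i -> sp_e Fv' i * sp_fld Fv' i l =A= sp_fld Fv' i l.
Proof. exact: (spEl Q_hd Q_tl tw RXA). Qed.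
Lemma aEr i l : l \in Fv' i -> sp_fld Fv' i l * sp_e Fv' i =A= sp_fld Fv' i l.
Proof. exact: (spEr Q_hd Q_tl tw RXA). Qed.
Lemma aArr a : sp_arr Fv' a =A= sp_e Fv' (Q_hd a) * sp_arr Fv' a * sp_e Fv' (Q_tl a).
Proof. exact: (spArr Q_hd Q_tl tw RXA). Qed.
Lemma aTw a z : z \in (Fv' (Q_hd a) :&: Fv' (Q_tl a))%VS ->
  sp_arr Fv' a * sp_fld Fv' (Q_tl a) z =A= sp_fld Fv' (Q_hd a) (tw a z) * sp_arr Fv' a.
Proof. exact: (spTw tw RXA). Qed.
Lemma aX r : RXA r -> r =A= 0.
Proof. exact: (spX Q_hd Q_tl tw). Qed.
Lemma aSum : \sum_i sp_e Fv' i =A= 1.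
Proof. exact: (spSum Q_hd Q_tl tw RXA). Qed.
Lemma aOrth i j : i != j -> sp_e Fv' i * sp_e Fv' j =A= 0.
Proof. exact: (spOrth Q_hd Q_tl tw RXA). Qed.

Lemma sK z : z \in K -> s1 * (fb (z)) =B= (fb (z)) * s1.
Proof.
move=> Hz; have [h t] := s1_ends.
have Hz' : z \in (K :&: K)%VS by rewrite memv_cap Hz.
by have := bTw Qh_s1 Hz'; rewrite h t HtwK1.
Qed.
Lemma ss : s1 * s1 =B= (fb (v ^+ 2)).
Proof.
have := bX (r := s1 * s1 - (fb (v ^+ 2))) (or_intror (or_intror (or_intror erefl))).
by rewrite /eqv subr0.
Qed.
Lemma e1s1 : (fb (1)) * s1 =B= s1.
Proof.
have [h t] := s1_ends.
have HA : s1 =B= (fb (1)) * s1 * (fb (1)) by have := bArr Qh_s1; rewrite h t.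
apply: (eqv_trans (y := (fb (1)) * s1 * (fb (1)))); last exact: eqv_sym.
apply: (eqv_trans (y := ((fb (1)) * (fb (1))) * s1 * (fb (1)))).
  by have := eqvM (eqv_refl (fb 1)) HA; rewrite !mulrA.
apply: eqvM; last exact: eqv_refl.
apply: eqvM; last exact: eqv_refl.
exact: (bEl _ (mem1v K)).
Qed.

Lemma phiF_K i z : z \in K -> phiF i z =B= sp_fld FvK i z.
Proof.
move=> Hz; rewrite /phiF; case: eqP => [->|_]; last exact: eqv_refl.
have [-> ->] := caKin Hz.
apply: (eqv_trans (y := fb z + 0 * s1)); last by rewrite mul0r addr0; apply: eqv_refl.
by apply: eqvD; [apply: eqv_refl | apply: eqvM; [apply: b0 | apply: eqv_refl]].
Qed.

Lemma phiF_D i l m : l \in Fv' i -> m \in Fv' i -> phiF i (l + m) =B= phiF i l + phiF i m.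
Proof.
rewrite /phiF; case: eqP => [_|/eqP ne]; last first.
  by rewrite (Fv'ne ne) => Hl Hm; apply: bD.
move=> _ _; have [-> ->] := caD l m.
apply: (eqv_trans (y := (fb (ca l) + fb (ca m)) + (fb (cb l) + fb (cb m)) * s1)).
  apply: eqvD; first exact: bD (caK _) (caK _).
  by apply: eqvM; [apply: bD (cbK _) (cbK _) | apply: eqv_refl].
by apply: eqv_eq; rewrite mulrDl addrACA.
Qed.

Lemma sK' x z : z \in K -> x * s1 * fb z =B= x * fb z * s1.
Proof. by move=> Hz; apply: eqvMA; apply: sK. Qed.

Lemma phiF_M i l m : l \in Fv' i -> m \in Fv' i -> phiF i (l * m) =B= phiF i l * phiF i m.
Proof.
rewrite /phiF; case: eqP => [_|/eqP ne]; last first.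
  by rewrite (Fv'ne ne) => Hl Hm; apply: bM.
move=> _ _; have [-> ->] := caM l m.
move: (caK l) (cbK l) (caK m) (cbK m).
move: (ca l) (cb l) (ca m) (cb m) => a b c d Ha Hb Hc Hd.
apply: (eqv_trans (y := (fb a * fb c + fb b * s1 * (fb d * s1)) +
                        (fb a * (fb d * s1) + fb b * s1 * fb c))); last first.
  by apply: eqv_eq; rewrite mulrDl !mulrDr; apply: rearr.
apply: eqvD.
  apply: (eqv_trans (y := fb (a * c) + fb (b * d * v ^+ 2))).
    exact: bD (rpredM Ha Hc) (rpredM (rpredM Hb Hd) Hv2).
  apply: eqvD; first exact: bM.
  apply: (eqv_trans (y := fb b * fb d * fb (v ^+ 2))).
    apply: (eqv_trans (y := fb (b * d) * fb (v ^+ 2))).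
      exact: bM (rpredM Hb Hd) Hv2.
    by apply: eqvM; [apply: bM | apply: eqv_refl].
  apply: eqv_sym.
  apply: (eqv_trans (y := fb b * s1 * fb d * s1)); first exact: eqv_eq (mulrA _ _ _).
  apply: (eqv_trans (y := fb b * fb d * s1 * s1)).
    by apply: eqvM; [apply: sK' | apply: eqv_refl].
  apply: (eqv_trans (y := fb b * fb d * (s1 * s1))); first exact: eqv_eq (esym (mulrA _ _ _)).
  by apply: eqvM; [apply: eqv_refl | apply: ss].
apply: (eqv_trans (y := (fb a * fb d + fb b * fb c) * s1)).
  apply: eqvM; last exact: eqv_refl.
  by apply: (eqv_trans (bD _ (rpredM Ha Hd) (rpredM Hb Hc))); apply: eqvD; apply: bM.
apply: (eqv_trans (y := fb a * fb d * s1 + fb b * fb c * s1)); first exact: eqv_eq (mulrDl _ _ _).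
apply: eqvD; first exact: eqv_eq (esym (mulrA _ _ _)).
by apply: eqv_sym; apply: sK'.
Qed.

Lemma phiF_Z i (c : F) : phiF i c%:A =B= c *: phiF i 1.
Proof.
have HcK : c%:A \in K by rewrite rpredZ ?mem1v.
apply: (eqv_trans (phiF_K i HcK)); apply: (eqv_trans (bZ i c)).
by apply: eqvZ; apply: eqv_sym; apply: phiF_K; apply: mem1v.
Qed.

Lemma phiF_1 i : phiF i 1 =B= sp_e FvK i.
Proof. exact: phiF_K (mem1v K). Qed.

Lemma fA_e i : fA (sp_e Fv' i) = phiF i 1.
Proof. by rewrite /sp_e fA_fld mem1v. Qed.

Lemma fA_path a b : ideal_gen RB (sp_arr FvK (arrI a) * sp_arr FvK (arrI b)) ->
  ideal_gen RB (fA (sp_arr Fv' a * sp_arr Fv' b)).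
Proof. by rewrite rmorphM /= !fA_arr. Qed.

Lemma fA_rel r : RA r -> ideal_gen RB (fA r).
Proof.
case=> [Hs|Hx]; last first.
  have [e1 e2 e3] := arrI_paths.
  case: Hx => [->|[->|->]]; apply: fA_path; rewrite ?e1 ?e2 ?e3;
  apply: idlS; right; [left | right; left | right; right; left]; done.
case: Hs => [[i [l [m [Hl Hm ->]]]]|[[i [l [m [Hl Hm ->]]]]|[[i [c ->]]|[->|[[i [j [ij ->]]]|[[a ->]|[a [z [Hz ->]]]]]]]]].
- rewrite raddfB /= raddfD /= !fA_fld (rpredD Hl Hm) Hl Hm; exact: phiF_D.
- rewrite raddfB /= rmorphM /= !fA_fld (rpredM Hl Hm) Hl Hm; exact: phiF_M.
- have Hc : c%:A \in Fv' i by apply: inFv'; rewrite rpredZ ?mem1v.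
  rewrite raddfB /= linearZ /= fA_e fA_fld Hc; exact: phiF_Z.
- rewrite raddfB /= rmorph1 rmorph_sum /=.
  apply: (eqv_trans (y := \sum_i sp_e FvK i)); last exact: bSum.
  apply: eqv_sum => i _; rewrite fA_e; exact: phiF_1.
- rewrite rmorphM /= !fA_e; apply/(eqv0 _).
  apply: (eqv_trans (y := sp_e FvK i * sp_e FvK j)); last exact: bOrth.
  by apply: eqvM; apply: phiF_1.
- rewrite raddfB /= !rmorphM /= fA_arr !fA_e.
  have [hA tA] := hd_arrI a.
  apply: (eqv_trans (bArr (arrI a))); rewrite hA tA.
  by apply: eqvM; [apply: eqvM; [apply: eqv_sym; apply: phiF_1 | apply: eqv_refl] |
                   apply: eqv_sym; apply: phiF_1].
- have HzK := arr_capK Hz.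
  have Hz1 : z \in Fv' (Q_tl a) by apply: inFv'.
  have Hz2 : tw a z \in Fv' (Q_hd a) by apply: inFv'; apply: Htw.
  rewrite raddfB /= !rmorphM /= fA_arr !fA_fld Hz1 Hz2.
  have [hA tA] := hd_arrI a.
  apply: (eqv_trans (y := sp_arr FvK (arrI a) * sp_fld FvK (Q_tl a) z)).
    by apply: eqvM; [apply: eqv_refl | apply: phiF_K].
  apply: (eqv_trans (y := sp_fld FvK (Q_hd a) (tw a z) * sp_arr FvK (arrI a))); last first.
    by apply: eqvM; [apply: eqv_sym; apply: phiF_K; apply: Htw | apply: eqv_refl].
  have := bTw (arrI a) (z := z); rewrite hA tA /arrI HtwK //; apply.
  by rewrite memv_cap HzK.
Qed.

Lemma gB_e i : gB (sp_e FvK i) = sp_e Fv' i.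
Proof. by rewrite /sp_e gB_fld mem1v. Qed.
Lemma s1_ge : (Qh_s1 < 3)%N = false.
Proof. by rewrite /Qh_s1 inordK. Qed.

Lemma gB_path (b c : 'I_4) : (b < 3)%N -> (c < 3)%N ->
  ideal_gen RA (sp_arr Fv' (inord b) * sp_arr Fv' (inord c)) ->
  ideal_gen RA (gB (sp_arr FvK b * sp_arr FvK c)).
Proof. by move=> Hb Hc; rewrite rmorphM /= !gB_arr Hb Hc. Qed.

Lemma gB_rel r : RB r -> ideal_gen RA (gB r).
Proof.
case=> [Hs|Hx]; last first.
  have [e1 e2 e3] := inord_paths.
  case: Hx => [->|[->|[->|->]]].
  - by apply: gB_path; rewrite ?inordK //; apply: idlS; right; left.
  - by apply: gB_path; rewrite ?inordK //; apply: idlS; right; right; left.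
  - by apply: gB_path; rewrite ?inordK //; apply: idlS; right; right; right.
  rewrite raddfB /= rmorphM /= gB_arr s1_ge gB_fld Hv2 expr2.
  by apply: eqv_sym; apply: aM; apply: Fv'1.
case: Hs => [[i [l [m [Hl Hm ->]]]]|[[i [l [m [Hl Hm ->]]]]|[[i [c ->]]|[->|[[i [j [ij ->]]]|[[b ->]|[b [z [Hz ->]]]]]]]]].
- have Hl' : l \in K := Hl; have Hm' : m \in K := Hm.
  rewrite raddfB /= raddfD /= !gB_fld (rpredD Hl' Hm') Hl' Hm'.
  by apply: aD; apply: inFv'.
- have Hl' : l \in K := Hl; have Hm' : m \in K := Hm.
  rewrite raddfB /= rmorphM /= !gB_fld (rpredM Hl' Hm') Hl' Hm'.
  by apply: aM; apply: inFv'.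
- have Hc : c%:A \in K by rewrite rpredZ ?mem1v.
  rewrite raddfB /= linearZ /= gB_e gB_fld Hc; exact: aZ.
- rewrite raddfB /= rmorph1 rmorph_sum /=.
  apply: (eqv_trans (y := \sum_i sp_e Fv' i)); last exact: aSum.
  by apply: eqv_sum => i _; rewrite gB_e; apply: eqv_refl.
- rewrite rmorphM /= !gB_e; apply/(eqv0 _); exact: aOrth.
- rewrite raddfB /= !rmorphM /= !gB_e gB_arr.
  case: (boolP (b < 3)%N) => Hb.
    have := hd_arrI (inord b); rewrite arrIE // => -[-> ->].
    exact: aArr.
  move/b3: Hb => ->; have [-> ->] := s1_ends.
  apply: eqv_sym; apply: (eqv_trans (y := sp_fld Fv' vx1 v * sp_e Fv' vx1)).
    by apply: eqvM; [apply: aEl; apply: Fv'1 | apply: eqv_refl].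
  by apply: aEr; apply: Fv'1.
- have HzK : z \in K by move: Hz => /memv_capP[].
  rewrite raddfB /= !rmorphM /= !gB_arr.
  case: (boolP (b < 3)%N) => Hb.
    have Htw' : twK b z = tw (inord b) z by rewrite -{1}(arrIE Hb); apply: HtwK.
    rewrite Htw' !gB_fld HzK (Htw _ HzK).
    have := hd_arrI (inord b); rewrite arrIE // => -[-> ->].
    by apply: aTw; rewrite memv_cap !inFv'.
  move/b3: Hb => ->; have [-> ->] := s1_ends.
  rewrite (HtwK1 HzK) !gB_fld HzK.
  apply: (eqv_trans (y := sp_fld Fv' vx1 (v * z))); first by apply: eqv_sym; apply: aM; apply: Fv'1.
  apply: (eqv_trans (y := sp_fld Fv' vx1 (z * v))); first by rewrite mulrC; apply: eqv_refl.
  by apply: aM; apply: Fv'1.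
Qed.

Lemma rtA x : ideal_gen RA (gB (fA (fgen F x)) - fgen F x).
Proof.
case: x => [x|a].
  rewrite /fA liftL_gen sp_gen /=; case: x => [[i l] Hx] /=.
  rewrite /phiF; case: eqP => [->|/eqP ne].
    rewrite raddfD /= rmorphM /= !gB_fld caK cbK gB_arr s1_ge.
    apply: (eqv_trans (y := sp_fld Fv' vx1 (ca l) + sp_fld Fv' vx1 (cb l * v))).
      by apply: eqvD; [apply: eqv_refl | apply: eqv_sym; apply: aM; apply: Fv'1].
    apply: (eqv_trans (y := sp_fld Fv' vx1 (ca l + cb l * v))).
      by apply: eqv_sym; apply: aD; apply: Fv'1.
    by rewrite -caE; apply: eqv_refl.
  have HlK : l \in K by move: Hx; rewrite /= (Fv'ne ne).
  by rewrite gB_fld HlK subrr; apply: idl0.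
rewrite /fA liftL_gen sp_arrE /= gB_arr val_arrI ltn_ord inord_val subrr; exact: idl0.
Qed.

Lemma rtB x : ideal_gen RB (fA (gB (fgen F x)) - fgen F x).
Proof.
case: x => [x|b].
  rewrite /gB liftL_gen sp_gen /=; case: x => [[i l] Hx] /=.
  have HlK : l \in K := Hx.
  by rewrite fA_fld inFv' //; apply: phiF_K.
rewrite /gB liftL_gen sp_arrE /=.
case: (boolP (b < 3)%N) => Hb.
  by rewrite fA_arr arrIE // subrr; apply: idl0.
rewrite fA_fld Fv'1 /phiF eqxx; have [-> ->] := ca_v; move/b3: Hb => ->.
apply: (eqv_trans (y := 0 + s1)); last by rewrite add0r; apply: eqv_refl.
by apply: eqvD; [apply: b0 | apply: e1s1].
Qed.

Theorem main_iso : quot_alg_iso RA RB.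
Proof.
exists fA, gB; split.
- exact: map_ideal fA_rel.
- exact: map_ideal gB_rel.
- exact: roundtrip rtA.
- exact: roundtrip rtB.
Qed.
End Main.

Section FieldLemmas.
Variables (F : fieldType).

Lemma dec2 (E : fieldExtType F) (K : {subfield E}) x y :
  (adjoin_degree K x <= 2)%N -> y \in <<K; x>>%VS ->
  exists a b, [/\ a \in K, b \in K & y = a + b * x].
Proof.
move=> Hd Hy.
have Hp := Fadjoin_polyOver K x y.
have Hs : (size (Fadjoin_poly K x y) <= 2)%N := leq_trans (size_Fadjoin_poly K x y) Hd.
exists (Fadjoin_poly K x y)`_0, (Fadjoin_poly K x y)`_1; split; try exact: (polyOverP Hp).
rewrite -{1}(Fadjoin_poly_eq Hy) (horner_coef_wide x Hs) !big_ord_recl big_ord0 /=.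
by rewrite expr0 expr1 mulr1 addr0.
Qed.

Lemma add_self0 (E : fieldExtType F) (y : E) : (2%:R : F) != 0 -> y + y = 0 -> y = 0.
Proof.
move=> H2 Hy; apply/eqP; move: Hy; rewrite -mulr2n -scaler_nat => /eqP.
by rewrite scaler_eq0 (negbTE H2).
Qed.

Variable (L : splittingFieldType F).

Lemma gal_fix1 (s : gal_of {:L}) x : x \in 1%VS -> s x = x.
Proof. by move/vlineP=> [k ->]; apply: rmorph_alg. Qed.

Lemma gal_horner (s : gal_of {:L}) p x : p \is a polyOver 1%VS -> s p.[x] = p.[s x].
Proof.
move=> Hp; rewrite -horner_map; congr (_.[_]); apply/polyP => i.
by rewrite coef_map /= gal_fix1 //; apply: (polyOverP Hp).
Qed.

Lemma gal_adj (s : gal_of {:L}) x z : s x \in <<1; x>>%AS -> z \in <<1; x>>%AS ->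
  s z \in <<1; x>>%AS.
Proof.
move=> Hsx /Fadjoin_polyP [p Hp ->]; rewrite gal_horner //.
apply: rpred_horner => //; apply: polyOverS Hp => y; apply: subvP; apply: sub1v.
Qed.

Lemma gal_fix_adj (s : gal_of {:L}) x z : s x = x -> z \in <<1; x>>%AS -> s z = z.
Proof. by move=> Hsx /Fadjoin_polyP [p Hp ->]; rewrite gal_horner // Hsx. Qed.

Lemma galX_apply (s : gal_of {:L}) n z : (s ^+ n.+1)%g z = s ((s ^+ n)%g z).
Proof. by rewrite expgSr galM ?memvf. Qed.
End FieldLemmas.

Lemma partb : forall (F : fieldType) (L : splittingFieldType F) (theta : gal_of {:L})
          (u : L),
      2 \notin [pchar F] -> \dim {:L} = 2%N ->
      theta \in 'Gal({:L} / 1)%g -> theta != 1%g ->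
      u != 0 -> theta u = - u ->
      let Fv' (i : 'I_3) : {subfield L} := if i == vx1 then {:L}%AS else 1%AS in
      let FvK (i : 'I_3) : {subfield L} := 1%AS in
      quot_alg_iso (pres_rel Fv' Q_hd Q_tl (fun _ z => z) (Q_paths Fv'))
                   (pres_rel FvK Qh_hd Qh_tl (fun _ z => z) (Qh_rels FvK (u ^+ 2))).
Proof.
move=> F L theta u H2 Hdim _ _ Hu0 Hth Fv'' FvK'.
have two : (2%:R : F) != 0.
  by apply: contra H2 => H; rewrite inE /= H.
have HuK : u \notin (1%AS : {subfield L}).
  apply/negP => H1; have := gal_fix1 theta H1; rewrite Hth => Hm.
  have : u + u = 0 by rewrite -{1}Hm addNr.
  by move/(add_self0 two)/eqP; rewrite (negbTE Hu0).
have Had : adjoin_degree (1%AS : {subfield L}) u = 2%N.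
  have Hd := dim_Fadjoin (1%AS : {subfield L}) u; rewrite dimv1 muln1 in Hd.
  have Hle : (\dim <<(1%AS : {subfield L}); u>> <= 2)%N.
    by rewrite -Hdim; apply: dimvS; apply: subvf.
  have Hne1 : adjoin_degree (1%AS : {subfield L}) u != 1%N by rewrite adjoin_deg_eq1.
  rewrite Hd in Hle; move: Hle Hne1; rewrite /adjoin_degree.
  by case: (_.-1) => [|[|n]].
have Hfull : forall x, x \in <<(1%AS : {subfield L}); u>>%VS.
  move=> x; suff -> : (<<(1%AS : {subfield L}); u>>%VS = fullv) by rewrite memvf.
  by apply/eqP; rewrite eqEdim subvf dim_Fadjoin dimv1 muln1 Had Hdim /=.
have Hdec : forall x : L, exists a b, [/\ a \in (1%AS : {subfield L}), b \in (1%AS : {subfield L}) & x = a + b * u].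
  by move=> x; apply: dec2; rewrite ?Had.
have Hv2 : u ^+ 2 \in (1%AS : {subfield L}).
  have [a [b [Ha Hb Hab]]] := Hdec (u ^+ 2).
  have : theta (u ^+ 2) = a - b * u.
    by rewrite Hab rmorphD /= rmorphM /= (gal_fix1 _ Ha) (gal_fix1 _ Hb) Hth mulrN.
  rewrite rmorphXn /= Hth sqrrN Hab => /addrI Hbu.
  have : b * u + b * u = 0 by rewrite {1}Hbu addNr.
  move/(add_self0 two)/eqP; rewrite mulf_eq0 (negbTE Hu0) orbF => /eqP Hb0.
  by rewrite Hb0 mul0r addr0.
exact: (main_iso Hv2 HuK Hdec (fun _ z Hz => Hz) (fun _ _ _ => erefl) (fun _ _ => erefl)).
Qed.

Lemma parta : forall (F : fieldType) (E : splittingFieldType F) (rho : gal_of {:E})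
          (zeta : F) (v : E) (xa xb xc : 'Z_2),
      galois 1 {:E} -> \dim {:E} = 4%N ->
      ('Gal({:E} / 1) = <[rho]>)%g ->
      4.-primitive_root zeta ->
      v != 0 -> rho v = zeta%:A * v ->
      xa + xb + xc = 0 ->
      let u := v ^+ 2 in
      let L : {subfield E} := <<1; u>>%AS in
      let xi (a : 'I_3) : nat :=
        match val a with 0%N => xa | 1%N => xb | _ => xc end in
      let Fv' (i : 'I_3) : {subfield E} := if i == vx1 then {:E}%AS else L in
      let tw' (a : 'I_3) (z : E) : E := (rho ^+ xi a)%g z in
      let FvK (i : 'I_3) : {subfield E} := L in
      let twK (b : 'I_4) (z : E) : E :=
        match val b with
        | 0%N => (rho ^+ xa)%g z | 1%N => (rho ^+ xb)%g z
        | 2%N => (rho ^+ xc)%g z | _ => z end in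
      quot_alg_iso (pres_rel Fv' Q_hd Q_tl tw' (Q_paths Fv'))
                   (pres_rel FvK Qh_hd Qh_tl twK (Qh_rels FvK u)).
Proof.
move=> F E rho zeta v xa xb xc _ Hdim _ Hz Hv0 Hrv _ u L xi Fv'' tw' FvK' twK'.
have hne : zeta ^+ 2 != 1.
  by have := eq_prim_root_expr Hz 2 0; rewrite expr0 => ->.
have z2 : zeta ^+ 2 = -1.
  have h4 := prim_expr_order Hz.
  have : (zeta ^+ 2 - 1) * (zeta ^+ 2 + 1) = 0.
    by rewrite -subr_sqr -exprM h4 expr1n subrr.
  move/eqP; rewrite mulf_eq0 subr_eq0 (negbTE hne) /= addr_eq0.
  by move/eqP.
have two : (2%:R : F) != 0.
  apply: contra hne => H; rewrite z2 eq_sym -addr_eq0; exact: H.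
have zA2 : (zeta%:A : E) ^+ 2 = -1.
  by rewrite -(rmorphXn (in_alg E)) /= z2 scaleN1r.
have Hu0 : u != 0 by rewrite expf_neq0.
have rho_u : rho u = - u.
  by rewrite /u rmorphXn /= Hrv exprMn zA2 mulN1r.
have rho2v : (rho ^+ 2)%g v = - v.
  rewrite galX_apply expg1 Hrv rmorphM /= rmorph_alg Hrv mulrA -expr2 zA2.
  by rewrite mulN1r.
have rho2u : (rho ^+ 2)%g u = u.
  by rewrite galX_apply expg1 rho_u rmorphN /= rho_u opprK.
have HvK : v \notin L.
  apply/negP => HvL; have := gal_fix_adj rho2u HvL; rewrite rho2v => Hm.
  have : v + v = 0 by rewrite -{1}Hm addNr.
  by move/(add_self0 two)/eqP; rewrite (negbTE Hv0).
have HuF : u \notin (1%AS : {subfield E}).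
  apply/negP => H1; have := gal_fix1 rho H1; rewrite rho_u => Hm.
  have : u + u = 0 by rewrite -{1}Hm addNr.
  by move/(add_self0 two)/eqP; rewrite (negbTE Hu0).
have dimL : (2 <= \dim L)%N.
  rewrite /L dim_Fadjoin dimv1 muln1.
  have : adjoin_degree (1%AS : {subfield E}) u != 1%N by rewrite adjoin_deg_eq1.
  by rewrite /adjoin_degree; case: (_.-1).
have adL : (2 <= adjoin_degree L v)%N.
  have : adjoin_degree L v != 1%N by rewrite adjoin_deg_eq1.
  by rewrite /adjoin_degree; case: (_.-1).
have dimLv := dim_Fadjoin L v.
have dimLv4 : (\dim <<L; v>> <= 4)%N by rewrite -Hdim; apply: dimvS; apply: subvf.
have adL2 : (adjoin_degree L v <= 2)%N.
  move: dimL dimLv4; rewrite dimLv; move: (adjoin_degree L v) (\dim L) => n d; nia.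
have Hfull : forall x, x \in <<L; v>>%VS.
  move=> x; suff -> : (<<L; v>>%VS = fullv) by rewrite memvf.
  apply/eqP; rewrite eqEdim subvf Hdim dimLv /=.
  move: dimL adL; move: (adjoin_degree L v) (\dim L) => n d; nia.
have Hdec : forall x : E, exists a b, [/\ a \in L, b \in L & x = a + b * v].
  by move=> x; apply: dec2.
have HrL : forall n z, z \in L -> (rho ^+ n)%g z \in L.
  move=> n z Hz'; elim: n => [|n IH]; first by rewrite expg0 gal_id.
  rewrite galX_apply; apply: gal_adj => //.
  by rewrite rho_u rpredN memv_adjoin.
have Htw : forall a z, z \in L -> tw' a z \in L by move=> a z Hz'; apply: HrL.
have HtwK : forall (a : 'I_3) z, z \in L -> twK' (inord a) z = tw' a z.
  move=> a z _; rewrite /twK' /tw' /xi vinord; last by rewrite (ltn_trans (ltn_ord a)).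
  by case: a => [[|[|[|m]]] Hm].
have HtwK1 : forall z, z \in L -> twK' Qh_s1 z = z.
  by move=> z _; rewrite /twK' /Qh_s1 vinord.
have Hv2 : v ^+ 2 \in L by apply: memv_adjoin.
exact: (main_iso Hv2 HvK Hdec Htw HtwK HtwK1).
Qed.


Theorem proposition4p3 :
  (* (a) Block 3: degree-4 datum *)
  (forall (F : fieldType) (E : splittingFieldType F) (rho : gal_of {:E})
          (zeta : F) (v : E) (xa xb xc : 'Z_2),
      galois 1 {:E} -> \dim {:E} = 4%N ->
      ('Gal({:E} / 1) = <[rho]>)%g ->
      4.-primitive_root zeta ->
      v != 0 -> rho v = zeta%:A * v ->
      xa + xb + xc = 0 ->
      let u := v ^+ 2 in
      let L : {subfield E} := <<1; u>>%AS in
      (* theta^xi acts on L as rho^xi *)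
      let xi (a : 'I_3) : nat :=
        match val a with 0%N => xa | 1%N => xb | _ => xc end in
      (* Lambda' : F_1 = E, F_2 = F_3 = L, A_a twisted by theta^{xi_a} *)
      let Fv' (i : 'I_3) : {subfield E} := if i == vx1 then {:E}%AS else L in
      let tw' (a : 'I_3) (z : E) : E := (rho ^+ xi a)%g z in
      (* Lambda : K = L at every vertex, sigma_a = theta^{xi_a}, sigma_s1 = 1 *)
      let FvK (i : 'I_3) : {subfield E} := L in
      let twK (b : 'I_4) (z : E) : E :=
        match val b with
        | 0%N => (rho ^+ xa)%g z | 1%N => (rho ^+ xb)%g z
        | 2%N => (rho ^+ xc)%g z | _ => z end in
      quot_alg_iso (pres_rel Fv' Q_hd Q_tl tw' (Q_paths Fv'))
                   (pres_rel FvK Qh_hd Qh_tl twK (Qh_rels FvK u)))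
  /\
  (* (b) Block 9: degree-2 datum *)
  (forall (F : fieldType) (L : splittingFieldType F) (theta : gal_of {:L})
          (u : L),
      2 \notin [pchar F] -> \dim {:L} = 2%N ->
      theta \in 'Gal({:L} / 1)%g -> theta != 1%g ->
      u != 0 -> theta u = - u ->
      (* Lambda' : F_1 = L, F_2 = F_3 = F, no twists *)
      let Fv' (i : 'I_3) : {subfield L} := if i == vx1 then {:L}%AS else 1%AS in
      (* Lambda : K = F at every vertex, all sigma trivial *)
      let FvK (i : 'I_3) : {subfield L} := 1%AS in
      quot_alg_iso (pres_rel Fv' Q_hd Q_tl (fun _ z => z) (Q_paths Fv'))
                   (pres_rel FvK Qh_hd Qh_tl (fun _ z => z) (Qh_rels FvK (u ^+ 2)))).
Proof.
split; [exact: parta | exact: partb].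
Qed.
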